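(* Let $k\ge 4$ and $n\ge 4k^2$. Then there exist constants $c_k,C_k>0$ depending only on $k$ such that \[ c_kn\le crx_k(Q_n)\le C_kn. \] Thus $crx_k(Q_n)=\Theta_n(n)$.
   Context: $Q_n$ is the $n$-dimensional discrete binary cube: vertex set $\{0,1\}^n$, two vectors adjacent iff they differ in exactly one coordinate. An edge-coloured cycle is rainbow if its edges have distinct colours. For a graph $G$ in which any $k$ vertices lie on a common cycle, $crx_k(G)$ is the minimum number of colours in an edge-colouring of $G$ such that every set of $k$ vertices of $G$ lies in some rainbow cycle. *)

(* Defs.v *)
From HB Require Import structures.
From mathcomp Require Import all_boot all_order all_algebra.
Set Implicit Arguments. Unset Strict Implicit. Unset Printing Implicit Defensive.

Definition cube_vertex (n : nat) := {ffun 'I_n -> bool}.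

Definition cube_adj (n : nat) : rel (cube_vertex n) :=
  fun x y => #|[set i : 'I_n | x i != y i]| == 1%N.

Definition is_cube_cycle (n : nat) (c : seq (cube_vertex n)) : bool :=
  [&& (3 <= size c)%N, uniq c & cycle (@cube_adj n) c].

(* Edge colourings of Q_n with colours in 'I_m: a symmetric function on
   pairs of vertices (only values on edges matter). *)
Definition edge_colouring (n m : nat) (col : cube_vertex n -> cube_vertex n -> 'I_m) :=
  forall x y, col x y = col y x.

Definition cycle_colours (n m : nat) (col : cube_vertex n -> cube_vertex n -> 'I_m)
  (c : seq (cube_vertex n)) : seq 'I_m :=
  [seq col p.1 p.2 | p <- zip c (rot 1 c)].

Definition rainbow_cycle (n m : nat) (col : cube_vertex n -> cube_vertex n -> 'I_m)
  (c : seq (cube_vertex n)) : Prop :=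
  is_cube_cycle c /\ uniq (cycle_colours col c).

Definition k_rainbow_cyclic (k n m : nat) (col : cube_vertex n -> cube_vertex n -> 'I_m) :=
  forall S : {set cube_vertex n}, #|S| = k ->
    exists c : seq (cube_vertex n), rainbow_cycle col c /\ {subset S <= c}.

Definition crx_colourable (k n m : nat) : Prop :=
  exists col : cube_vertex n -> cube_vertex n -> 'I_m,
    edge_colouring col /\ k_rainbow_cyclic k col.

Definition is_crx (k n m : nat) : Prop :=
  crx_colourable k n m /\ forall m', crx_colourable k n m' -> (m <= m')%N.

(* Main.v *)
Require Import Defs.
From HB Require Import structures.
From mathcomp Require Import all_boot all_order all_algebra.
From mathcomp Require Import zify.
From Stdlib Require Import Classical.
Set Implicit Arguments. Unset Strict Implicit. Unset Printing Implicit Defensive.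


Section Generic.
Variable n : nat.
Local Notation V := (cube_vertex n).
Implicit Types (a b w v : V) (R : pred 'I_n).

Definition flip (v : V) (i : 'I_n) : V := [ffun j => if j == i then ~~ v j else v j].

Lemma flipE v i j : flip v i j = if j == i then ~~ v j else v j.
Proof. by rewrite ffunE. Qed.

Lemma adj_flip v i : cube_adj v (flip v i).
Proof.
rewrite /cube_adj; apply/eqP.
have -> : [set j | v j != flip v i j] = [set i].
  apply/setP => j; rewrite !inE flipE; case: (j == i) => /=; last by rewrite eqxx.
  by case: (v j).
by rewrite cards1.
Qed.

Lemma scanl_flip_out a L w j : w \in scanl flip a L -> j \notin L -> w j = a j.
Proof.
elim: L a => [|i L IH] a //=; rewrite !inE => /orP [/eqP -> | Hw] /norP [Hji HjL].
  by rewrite flipE (negbTE Hji).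
by rewrite (IH _ Hw HjL) flipE (negbTE Hji).
Qed.

Lemma scanl_flip_wit a L w : uniq L -> w \in scanl flip a L -> exists2 i, i \in L & w i != a i.
Proof.
elim: L a => [|i L IH] a //= /andP [HiL HL]; rewrite inE => /orP [/eqP -> | Hw].
  by exists i; rewrite ?inE ?eqxx // flipE eqxx; case: (a i).
exists i; first by rewrite inE eqxx.
by rewrite (scanl_flip_out Hw HiL) flipE eqxx; case: (a i).
Qed.

Lemma scanl_flip_uniq a L : uniq L -> uniq (scanl flip a L).
Proof.
elim: L a => [|i L IH] a //= /andP [HiL HL]; rewrite IH // andbT.
apply/negP => Hw; have [j _] := scanl_flip_wit HL Hw; by rewrite eqxx.
Qed.

Lemma foldl_flip a L : uniq L -> foldl flip a L = [ffun j => (j \in L) (+) a j].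
Proof.
elim: L a => [|i L IH] a /=; first by move=> _; apply/ffunP => j; rewrite ffunE.
move=> /andP [HiL HL]; rewrite IH //; apply/ffunP => j; rewrite !ffunE inE.
case: (eqVneq j i) => [-> |]; last by [].
by rewrite (negbTE HiL) /=; case: (a i).
Qed.

Lemma path_scanl_flip (a : V) L : path (@cube_adj n) a (scanl flip a L).
Proof. elim: L a => [|i L IH] a //=; by rewrite adj_flip IH. Qed.

Lemma last_scanl_flip a L : last a (scanl flip a L) = foldl flip a L.
Proof. by elim: L a => [|i L IH] a //=. Qed.

Definition diffs (R : pred 'I_n) (a b : V) : seq 'I_n :=
  [seq i <- enum 'I_n | R i && (a i != b i)].
Definition walk (R : pred 'I_n) (a b : V) := scanl flip a (diffs R a b).
Definition agree (R : pred 'I_n) (a b : V) := forall i, R i -> a i = b i.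

Lemma diffs_uniq R a b : uniq (diffs R a b).
Proof. by rewrite filter_uniq // enum_uniq. Qed.

Lemma mem_diffs R a b i : (i \in diffs R a b) = R i && (a i != b i).
Proof. by rewrite mem_filter mem_enum andbT. Qed.

Lemma walk_agree R a b w i : w \in walk R a b -> a i = b i -> w i = a i.
Proof.
move=> Hw Hab; apply: (scanl_flip_out Hw); by rewrite mem_diffs Hab eqxx andbF.
Qed.

Lemma walk_wit R a b w : w \in walk R a b ->
  exists i, [/\ R i, a i != b i & w i != a i].
Proof.
move=> Hw; have [i] := scanl_flip_wit (diffs_uniq R a b) Hw.
rewrite mem_diffs => /andP [H1 H2] H3; by exists i.
Qed.

Lemma walk_uniq R a b : uniq (walk R a b).
Proof. exact: scanl_flip_uniq (diffs_uniq _ _ _). Qed.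

Lemma walk_last R a b : (forall i, ~~ R i -> a i = b i) -> last a (walk R a b) = b.
Proof.
move=> Hout; rewrite last_scanl_flip foldl_flip ?diffs_uniq //.
apply/ffunP => j; rewrite ffunE mem_diffs.
case HR: (R j) => /=; last by rewrite Hout ?HR.
by case: (a j) (b j) => [] [].
Qed.

Lemma walk_single R a b c w : w \in walk R a b -> (forall i, i != c -> a i = b i) -> w = b.
Proof.
move=> Hw Hc; have [i [_ Hab Hwa]] := walk_wit Hw.
have Hic : i = c by apply/eqP; apply: contraNT Hab => /Hc ->.
subst i; apply/ffunP => j; case: (eqVneq j c) => [-> | Hjc].
  by move: Hab Hwa; case: (a c) (b c) (w c) => [] [] [].
by rewrite (walk_agree Hw (Hc _ Hjc)) Hc.
Qed.

Lemma walk_mem_last R a b : (forall i, ~~ R i -> a i = b i) -> a != b -> b \in walk R a b.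
Proof.
move=> Hout Hab; have := mem_last a (walk R a b); rewrite walk_last // inE.
by rewrite eq_sym (negbTE Hab).
Qed.

Fixpoint fedges (a : V) (L : seq 'I_n) : seq (V * 'I_n) :=
  if L is i :: L' then (a, i) :: fedges (flip a i) L' else [::].

Lemma fedges_snd a L : [seq e.2 | e <- fedges a L] = L.
Proof. by elim: L a => [|i L IH] a //=; rewrite IH. Qed.

Lemma fedges_out a L e j : e \in fedges a L -> j \notin L -> e.1 j = a j.
Proof.
elim: L a => [|i L IH] a //=; rewrite !inE => /orP [/eqP -> | He] /norP [Hji HjL] //.
by rewrite (IH _ He HjL) flipE (negbTE Hji).
Qed.

Lemma fedges_dir a L e : e \in fedges a L -> e.2 \in L.
Proof.
move=> He; have : e.2 \in [seq e.2 | e <- fedges a L] by apply: map_f.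
by rewrite fedges_snd.
Qed.

Lemma zip_scanl_flip a L :
  zip (a :: scanl flip a L) (scanl flip a L) = [seq (e.1, flip e.1 e.2) | e <- fedges a L].
Proof. elim: L a => [|i L IH] a //=; by rewrite IH. Qed.

Definition pedges (R : pred 'I_n) (a b : V) := fedges a (diffs R a b).

Lemma pedges_agree R a b e i : e \in pedges R a b -> a i = b i -> e.1 i = a i.
Proof. move=> He Hab; apply: (fedges_out He); by rewrite mem_diffs Hab eqxx andbF. Qed.

Lemma pedges_dir R a b e : e \in pedges R a b -> R e.2 /\ a e.2 != b e.2.
Proof. by move/fedges_dir; rewrite mem_diffs => /andP. Qed.

Lemma zip_cat_last (T : Type) (x : T) (s1 s2 : seq T) :
  zip (x :: s1 ++ s2) (s1 ++ s2) = zip (x :: s1) s1 ++ zip (last x s1 :: s2) s2.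
Proof. by elim: s1 x => [|y s1 IH] x //=; rewrite IH. Qed.

Lemma zip_rot1 (T : Type) (a : T) (s : seq T) (z : T) :
  zip (a :: s) (rcons s z) = rcons (zip (a :: s) s) (last a s, z).
Proof. by elim: s a => [|b s IH] a //=; rewrite IH. Qed.

End Generic.


Section Chains.
Variable n : nat.
Local Notation V := (cube_vertex n).
Implicit Types (a b w v x : V) (R : pred 'I_n).

Definition piece := (pred 'I_n * V * V)%type.
Definition pwalk (pc : piece) := walk pc.1.1 pc.1.2 pc.2.
Definition ppedges (pc : piece) := pedges pc.1.1 pc.1.2 pc.2.
Fixpoint chainok x (pcs : seq piece) : Prop :=
  if pcs is pc :: r then [/\ pc.1.2 = x, (forall i, ~~ pc.1.1 i -> pc.1.2 i = pc.2 i) & chainok pc.2 r]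
  else True.
Fixpoint chainend x (pcs : seq piece) : V := if pcs is pc :: r then chainend pc.2 r else x.

Lemma chainok_cat x s1 s2 : chainok x s1 -> chainok (chainend x s1) s2 -> chainok x (s1 ++ s2).
Proof. elim: s1 x => [|pc s1 IH] x //= [H1 H2 H3] H4; split => //; exact: IH. Qed.

Lemma chainend_cat x s1 s2 : chainend x (s1 ++ s2) = chainend (chainend x s1) s2.
Proof. by elim: s1 x => [|pc s1 IH] x //=. Qed.

Lemma chain_path x pcs : chainok x pcs ->
  path (@cube_adj n) x (flatten (map pwalk pcs)) /\ last x (flatten (map pwalk pcs)) = chainend x pcs.
Proof.
elim: pcs x => [|[[R a] b] pcs IH] x //= [/= Hax Hout Hc]; subst a.
have [IH1 IH2] := IH _ Hc.
rewrite cat_path last_cat path_scanl_flip /=.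
have -> : last x (pwalk (R, x, b)) = b by exact: walk_last.
by rewrite IH1 IH2.
Qed.

Lemma chain_zip x pcs : chainok x pcs ->
  zip (x :: flatten (map pwalk pcs)) (flatten (map pwalk pcs)) =
  [seq (e.1, flip e.1 e.2) | e <- flatten (map ppedges pcs)].
Proof.
elim: pcs x => [|[[R a] b] pcs IH] x //= [/= Hax Hout Hc]; subst a.
rewrite zip_cat_last map_cat.
have -> : last x (pwalk (R, x, b)) = b by exact: walk_last.
by rewrite IH // /pwalk /walk zip_scanl_flip.
Qed.

End Chains.

Lemma uniq_flatten_lab (A L : eqType) (ls : seq L) (F : L -> seq A) :
  uniq ls -> (forall l, l \in ls -> uniq (F l)) ->
  (forall l1 l2 x, l1 \in ls -> l2 \in ls -> x \in F l1 -> x \in F l2 -> l1 = l2) ->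
  uniq (flatten (map F ls)).
Proof.
elim: ls => [|l ls IH] //= /andP [Hl Hls] HU HD.
rewrite cat_uniq HU ?inE ?eqxx // IH //; last first.
- by move=> l1 l2 x H1 H2; apply: HD; rewrite inE ?H1 ?H2 orbT.
- by move=> l1 H1; apply: HU; rewrite inE H1 orbT.
rewrite andbT; apply/hasPn => x /flattenP [s /mapP [l2 Hl2 ->] Hx]; apply/negP => Hx'.
have E := HD l l2 x (mem_head _ _) (mem_behead (Hl2 : l2 \in behead (l :: ls))) Hx' Hx.
by move: Hl; rewrite E Hl2.
Qed.


Section Colour.
Variables (n t : nat) (Htn : t <= n) (i0 : 'I_n).
Local Notation V := (cube_vertex n).
Definition KT := ('I_n * {ffun 'I_t -> bool})%type.

Definition dir (x y : V) : 'I_n := odflt i0 [pick i | x i != y i].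
Definition keyc (x y : V) : KT :=
  (dir x y, [ffun j : 'I_t => (widen_ord Htn j != dir x y) && x (widen_ord Htn j) && y (widen_ord Htn j)]).
Definition colr (x y : V) : 'I_#|{: KT}| := enum_rank (keyc x y).

Lemma dir_sym x y : dir x y = dir y x.
Proof. by rewrite /dir (eq_pick (_ : _ =1 (fun i => y i != x i))) // => i; rewrite eq_sym. Qed.

Lemma colr_sym x y : colr x y = colr y x.
Proof.
rewrite /colr /keyc dir_sym; congr (enum_rank (_, _)); apply/ffunP => j; rewrite !ffunE.
by rewrite -!andbA [x _ && _]andbC.
Qed.

Definition keyE (e : V * 'I_n) : KT :=
  (e.2, [ffun j : 'I_t => (widen_ord Htn j != e.2) && e.1 (widen_ord Htn j)]).

Lemma dir_flip w i : dir w (flip w i) = i.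
Proof.
rewrite /dir; case: pickP => [j | H] /=.
  by rewrite flipE; case: (eqVneq j i) => [-> //|]; rewrite eqxx.
by move: (H i); rewrite flipE eqxx; case: (w i).
Qed.

Lemma colr_flip w i : colr w (flip w i) = enum_rank (keyE (w, i)).
Proof.
rewrite /colr /keyc /keyE dir_flip; congr (enum_rank (_, _)); apply/ffunP => j; rewrite !ffunE /=.
case: (eqVneq (widen_ord Htn j) i) => //= H; last by rewrite andbb.
Qed.

Lemma keyE_eq e e' : keyE e = keyE e' ->
  e.2 = e'.2 /\ forall j : 'I_n, j < t -> j != e.2 -> e.1 j = e'.1 j.
Proof.
case: e e' => [w i] [w' i'] [/= Hi Hf]; subst i'; split => // j Hj Hji.
have := congr1 (fun f : {ffun 'I_t -> bool} => f (Ordinal Hj)) Hf; rewrite !ffunE /=.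
have -> : widen_ord Htn (Ordinal Hj) = j by apply: val_inj.
by rewrite Hji.
Qed.

End Colour.


Section Construction.
Variables (k n : nat).
Local Notation V := (cube_vertex n).
Definition p := 3 * k.
Definition q := 2 * k.
Definition ttk := (p + q).+1.
Hypothesis Htn : ttk <= n.
Lemma Hyn : p + q < n. Proof. exact: Htn. Qed.
Definition yI : 'I_n := Ordinal Hyn.

Definition inP : pred 'I_n := fun i => i < p.
Definition inQ' : pred 'I_n := fun i => (p <= i) && (i < p + q).
Definition isY : pred 'I_n := fun i => nat_of_ord i == p + q.
Definition inR : pred 'I_n := fun i => p + q < i.
Definition inQ : pred 'I_n := fun i => (p <= i) && (i <= p + q).

Variant reg_spec (i : nat) : bool -> bool -> bool -> bool -> bool -> Set :=
| RegP of i < p : reg_spec i true false false false false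
| RegQ of p <= i & i < p + q : reg_spec i false true false false true
| RegY of i = p + q : reg_spec i false false true false true
| RegR of p + q < i : reg_spec i false false false true false.

Lemma regP i : reg_spec i (i < p) ((p <= i) && (i < p + q)) (i == p + q) (p + q < i)
  ((p <= i) && (i <= p + q)).
Proof.
case: (ltnP i p) => H1 /=.
  have -> : (i == p + q) = false by lia.
  have -> : (p + q < i) = false by lia.
  by constructor.
case: (ltnP i (p + q)) => H2 /=.
  have -> : (i == p + q) = false by lia.
  have -> : (i <= p + q) = true by lia.
  have -> : (p + q < i) = false by lia.
  by constructor.
case: (eqVneq i (p + q)) => H3 /=.
  by rewrite H3 leqnn ltnn; constructor.
have -> : (p + q < i) = true by lia.
have -> : (i <= p + q) = false by lia.
by constructor; lia.
Qed.

Definition build (PP QQ YY RR : V) : V :=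
  [ffun i : 'I_n => if i < p then PP i else if (p <= i) && (i < p + q) then QQ i
                    else if nat_of_ord i == p + q then YY i else RR i].
Definition ZZ : V := [ffun => false].

Variables (x0 : V) (xs : seq V) (sel : nat -> 'I_n) (hsel : nat -> V).
Hypothesis Hk : 0 < k.
Hypothesis Hsz : size xs = k.
Hypothesis Huniq : uniq xs.
Hypothesis Hsel : forall j, sel j < p.

Definition u j := nth x0 xs j.
Definition v j := nth x0 xs (j.+1 %% k).
Definition cu j := sel j.
Definition cv j := sel (k + j).
Definition G j := flip (u j) (cu j).
Definition G' j := flip (v j) (cv j).
Definition H j := hsel j.
Definition ptag idx := if idx < k then G idx else G' (idx - k).

Hypothesis Htag_dist : forall j1 j2, j1 < 2 * k -> j2 < 2 * k -> agree inP (ptag j1) (ptag j2) -> j1 = j2.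
Hypothesis Htag_B : forall j x, j < 2 * k -> x \in xs -> ~ agree inP (ptag j) x.
Hypothesis Hh_y : forall j, hsel j yI = true.
Hypothesis Hh_dist : forall j1 j2, j1 < k -> j2 < k -> agree inQ (hsel j1) (hsel j2) -> j1 = j2.
Hypothesis Hh_B : forall j x, j < k -> x \in xs -> ~ agree inQ (hsel j) x.

Definition st j r : V :=
  match r with
  | 0 => u j
  | 1 => build (G j) (u j) (u j) (u j)
  | 2 => build (G j) (u j) (u j) (v j)
  | 3 => build (G j) (u j) ZZ (v j)
  | 4 => build (G j) (H j) ZZ (v j)
  | 5 => build (G j) (H j) (H j) (v j)
  | 6 => build (G' j) (H j) (H j) (v j)
  | 7 => build (G' j) (H j) ZZ (v j)
  | 8 => build (G' j) (v j) ZZ (v j)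
  | 9 => build (G' j) (v j) (v j) (v j)
  | _ => v j
  end.

Definition region r : pred 'I_n :=
  match r with
  | 0 => inP | 1 => inR | 2 => isY | 3 => inQ' | 4 => isY
  | 5 => inP | 6 => isY | 7 => inQ' | 8 => isY | _ => inP
  end.

Definition pc j r : piece n := (region r, st j r, st j r.+1).
Definition seg j := map (pc j) (iota 0 10).
Arguments seg : simpl never.

Lemma u_mem j : j < k -> u j \in xs.
Proof. by move=> Hj; apply: mem_nth; rewrite Hsz. Qed.
Lemma v_mem j : v j \in xs.
Proof. by apply: mem_nth; rewrite Hsz ltn_mod. Qed.

Lemma cu_ne i j : ~~ (i < p) -> (i == cu j) = false.
Proof. move=> Hi; apply/negbTE; apply: contra Hi => /eqP ->; exact: Hsel. Qed.
Lemma cv_ne i j : ~~ (i < p) -> (i == cv j) = false.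
Proof. move=> Hi; apply/negbTE; apply: contra Hi => /eqP ->; exact: Hsel. Qed.

Lemma seg_chain j : chainok (u j) (seg j) /\ chainend (u j) (seg j) = v j.
Proof.
rewrite /seg /=.
split => //.
do 10! (split; [done | move=> i; rewrite /inP /inQ' /isY /inR /build !ffunE; case: (regP i) => // | ]).
done.
Qed.

Definition allsegs m := flatten [seq seg j | j <- iota 0 m].

Lemma allsegs_chain m : m < k -> chainok (u 0) (allsegs m.+1) /\ chainend (u 0) (allsegs m.+1) = v m.
Proof.
elim: m => [|m IH] Hm.
  rewrite /allsegs (_ : flatten [seq seg j | j <- iota 0 1] = seg 0); last by rewrite /= ?cats0.
  exact: seg_chain.
have [IH1 IH2] := IH (ltnW Hm).
have E : v m = u m.+1 by rewrite /v /u modn_small.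
rewrite /allsegs -addn1 iotaD map_cat flatten_cat add0n.
rewrite (_ : flatten [seq seg j | j <- iota m.+1 1] = seg m.+1); last by rewrite /= ?cats0.
split; first by apply: chainok_cat => //; rewrite ?addn1 IH2 E; case: (seg_chain m.+1).
by rewrite chainend_cat ?addn1 IH2 E; case: (seg_chain m.+1).
Qed.

Definition labels := flatten [seq [seq (j, r) | r <- iota 0 10] | j <- iota 0 k].
Definition allp := [seq pc l.1 l.2 | l <- labels].

Lemma allp_segs : allp = allsegs k.
Proof.
rewrite /allp /labels /allsegs map_flatten -map_comp; congr flatten.
Qed.

Lemma allp_chain : chainok (u 0) allp /\ chainend (u 0) allp = u 0.
Proof.
rewrite allp_segs; have Hk1 : k.-1 < k by lia.
have := allsegs_chain Hk1; rewrite prednK // => -[H1 ->]; split => //.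
by rewrite /v /u prednK // modnn.
Qed.

Lemma mem_labels l : (l \in labels) = (l.1 < k) && (l.2 < 10).
Proof.
case: l => j r; apply/flattenP/idP => [[s /mapP [j' Hj' ->] /mapP [r' Hr' [-> ->]]] | /andP [Hj Hr]].
  by move: Hj' Hr'; rewrite !mem_iota /= !add0n => -> ->.
exists [seq (j, r) | r <- iota 0 10]; first by apply: map_f; rewrite mem_iota.
by apply: map_f; rewrite mem_iota.
Qed.

Lemma labels_uniq : uniq labels.
Proof.
apply: uniq_flatten_lab; first by rewrite iota_uniq.
  by move=> j _; rewrite map_inj_uniq ?iota_uniq // => a b [].
move=> j1 j2 [a b] _ _ /mapP [r1 _ [-> _]] /mapP [r2 _ [-> _]] //.
Qed.


Lemma bP PP QQ YY RR (i : 'I_n) : i < p -> build PP QQ YY RR i = PP i.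
Proof. by move=> Hi; rewrite ffunE Hi. Qed.
Lemma bQ PP QQ YY RR (i : 'I_n) : p <= i < p + q -> build PP QQ YY RR i = QQ i.
Proof. by move=> Hi; rewrite ffunE Hi; have -> : (i < p) = false by lia. Qed.
Lemma bY PP QQ YY RR : build PP QQ YY RR yI = YY yI.
Proof.
by rewrite ffunE /= ltnNge leq_addr ltnn andbF eqxx.
Qed.
Lemma bR PP QQ YY RR (i : 'I_n) : p + q < i -> build PP QQ YY RR i = RR i.
Proof.
move=> Hi; rewrite ffunE; have -> : (i < p) = false by lia.
have -> : (p <= i) && (i < p + q) = false by lia.
by have -> : (nat_of_ord i == p + q) = false by lia.
Qed.
Lemma isY_eq (i : 'I_n) : isY i -> i = yI.
Proof. by move/eqP => Hi; apply: val_inj. Qed.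
Lemma inQ_split (i : 'I_n) : inQ i -> inQ' i \/ i = yI.
Proof.
rewrite /inQ /inQ' => Hi; case: (ltnP i (p + q)) => H2; first by left; lia.
by right; apply: val_inj => /=; lia.
Qed.
Lemma yI_Q : inQ yI. Proof. by rewrite /inQ /= leq_addr leqnn. Qed.

Definition descV j r (w : V) : Prop :=
  match r with
  | 0 => [/\ agree inP w (G j), agree inQ w (u j) & agree inR w (u j)]
  | 1 => [/\ agree inP w (G j), agree inQ w (u j) & ~ agree inR w (u j)]
  | 2 => [/\ agree inP w (G j), w yI = false, agree inQ' w (u j) & u j yI = true]
  | 3 => [/\ agree inP w (G j), w yI = false & ~ agree inQ' w (u j)]
  | 4 => agree inP w (G j) /\ agree inQ w (H j)
  | 5 => agree inQ w (H j) /\ ~ agree inP w (G j)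
  | 6 => [/\ agree inP w (G' j), w yI = false & agree inQ' w (H j)]
  | 7 => [/\ agree inP w (G' j), w yI = false & ~ agree inQ' w (H j)]
  | 8 => [/\ agree inP w (G' j), agree inQ w (v j) & v j yI = true]
  | _ => w = v j
  end.

Lemma descV_ok j r w : r < 10 -> w \in pwalk (pc j r) -> descV j r w.
Proof.
rewrite /pwalk /pc /=.
case: r => [|[|[|[|[|[|[|[|[|[|r]]]]]]]]]] // _ Hw /=.
- have E : w = st j 1.
    apply: (walk_single Hw (c := cu j)) => i Hi /=; rewrite ffunE.
    case: ifP => _; [by rewrite /G flipE (negbTE Hi) | by case: (p <= i < p + q) => //; case: (_ == _)].
  subst w; split.
  + by move=> i Hi; rewrite bP.
  + by move=> i /inQ_split [Hi | ->]; [rewrite bQ | rewrite bY].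
  + by move=> i Hi; rewrite bR.
- split.
  + by move=> i Hi; rewrite (walk_agree Hw) /= !bP.
  + by move=> i /inQ_split [Hi | ->]; rewrite (walk_agree Hw) /= ?bY // !bQ.
  + move=> Ha; have [i [Hi _ Hwi]] := walk_wit Hw; move: Hwi; rewrite Ha //= bR //.
    by rewrite eqxx.
- have [i [/isY_eq Hi Hne Hwi]] := walk_wit Hw; subst i; move: Hne Hwi; rewrite /= !bY /= ffunE.
  move=> Huy Hwy; have Hu : u j yI = true by move: Huy; case: (u j yI).
  split => //.
  + by move=> i Hi; rewrite (walk_agree Hw) /= !bP.
  + by move: Hwy; rewrite Hu; case: (w yI).
  + by move=> i Hi; rewrite (walk_agree Hw) /= !bQ.
- split.
  + by move=> i Hi; rewrite (walk_agree Hw) /= !bP.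
  + by rewrite (walk_agree Hw) /= !bY ffunE.
  + move=> Ha; have [i [Hi _ Hwi]] := walk_wit Hw; move: Hwi; rewrite Ha //= bQ //.
    by rewrite eqxx.
- have [i [/isY_eq Hi Hne Hwi]] := walk_wit Hw; subst i; move: Hne Hwi; rewrite /= !bY /= ffunE.
  move=> _ Hwy; split.
  + by move=> i Hi; rewrite (walk_agree Hw) /= !bP.
  + move=> i /inQ_split [Hi | ->]; last by rewrite /H Hh_y; move: Hwy; case: (w yI).
    by rewrite (walk_agree Hw) /= !bQ.
- split.
  + by move=> i /inQ_split [Hi | ->]; rewrite (walk_agree Hw) /= ?bY // !bQ.
  + move=> Ha; have [i [Hi _ Hwi]] := walk_wit Hw; move: Hwi; rewrite Ha //= bP //.
    by rewrite eqxx.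
- have [i [/isY_eq Hi Hne Hwi]] := walk_wit Hw; subst i; move: Hne Hwi; rewrite /= !bY /= ffunE.
  move=> _ Hwy; split.
  + by move=> i Hi; rewrite (walk_agree Hw) /= !bP.
  + by move: Hwy; rewrite /H Hh_y; case: (w yI).
  + by move=> i Hi; rewrite (walk_agree Hw) /= !bQ.
- split.
  + by move=> i Hi; rewrite (walk_agree Hw) /= !bP.
  + by rewrite (walk_agree Hw) /= !bY ffunE.
  + move=> Ha; have [i [Hi _ Hwi]] := walk_wit Hw; move: Hwi; rewrite Ha //= bQ //.
    by rewrite eqxx.
- have [i [/isY_eq Hi Hne Hwi]] := walk_wit Hw; subst i; move: Hne Hwi; rewrite /= !bY /= ffunE.
  move=> Hvy Hwy; have Hv : v j yI = true by move: Hvy; case: (v j yI).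
  split => //.
  + by move=> i Hi; rewrite (walk_agree Hw) /= !bP.
  + move=> i /inQ_split [Hi | ->]; last by rewrite Hv; move: Hwy; case: (w yI).
    by rewrite (walk_agree Hw) /= !bQ.
- apply: (walk_single Hw (c := cv j)) => i Hi /=; rewrite ffunE.
  case: ifP => _; [by rewrite /G' flipE (negbTE Hi) | by case: (p <= i < p + q) => //; case: (_ == _)].
Qed.


Lemma agree_tr R (a b c : V) : agree R a b -> agree R a c -> agree R b c.
Proof. by move=> H1 H2 i Hi; rewrite -H1 // H2. Qed.

Lemma ptagG j : j < k -> ptag j = G j.
Proof. by rewrite /ptag => ->. Qed.
Lemma ptagG' j : ptag (k + j) = G' j.
Proof. by rewrite /ptag ltnNge leq_addr /= addKn. Qed.

Lemma GG a j j' : j < k -> j' < k -> agree inP a (G j) -> agree inP a (G j') -> j = j'.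
Proof.
move=> Hj Hj' H1 H2; apply: Htag_dist; try lia.
by rewrite !ptagG //; apply: agree_tr H1 H2.
Qed.
Lemma GG'F a j j' : j < k -> j' < k -> agree inP a (G j) -> agree inP a (G' j') -> False.
Proof.
move=> Hj Hj' H1 H2; have := @Htag_dist j (k + j'); rewrite ptagG // ptagG'.
move=> /(_ _ _ (agree_tr H1 H2)); lia.
Qed.
Lemma G'G' a j j' : j < k -> j' < k -> agree inP a (G' j) -> agree inP a (G' j') -> j = j'.
Proof.
move=> Hj Hj' H1 H2; have := @Htag_dist (k + j) (k + j'); rewrite !ptagG'.
move=> /(_ _ _ (agree_tr H1 H2)); lia.
Qed.
Lemma GBF a j x : j < k -> x \in xs -> agree inP a (G j) -> agree inP a x -> False.
Proof.
move=> Hj Hx H1 H2; apply: (@Htag_B j x) => //; first lia.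
by rewrite ptagG //; apply: agree_tr H1 H2.
Qed.
Lemma G'BF a j x : j < k -> x \in xs -> agree inP a (G' j) -> agree inP a x -> False.
Proof.
move=> Hj Hx H1 H2; apply: (@Htag_B (k + j) x) => //; first lia.
by rewrite ptagG'; apply: agree_tr H1 H2.
Qed.
Lemma HH a j j' : j < k -> j' < k -> agree inQ a (H j) -> agree inQ a (H j') -> j = j'.
Proof. by move=> Hj Hj' H1 H2; apply: Hh_dist => //; apply: agree_tr H1 H2. Qed.
Lemma HBF a j x : j < k -> x \in xs -> agree inQ a (H j) -> agree inQ a x -> False.
Proof. by move=> Hj Hx H1 H2; apply: (@Hh_B j x) => //; apply: agree_tr H1 H2. Qed.
Lemma Hyt a j : agree inQ a (H j) -> a yI = true.
Proof. by move=> H1; rewrite H1 ?yI_Q // /H Hh_y. Qed.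
Lemma Qy a b : agree inQ a b -> a yI = b yI.
Proof. by move=> H1; rewrite H1 ?yI_Q. Qed.
Lemma QQ' a b : agree inQ a b -> agree inQ' a b.
Proof. move=> H1 i Hi; apply: H1; move: Hi; rewrite /inQ /inQ'; lia. Qed.
Lemma v_inj j j' : j < k -> j' < k -> v j = v j' -> j = j'.
Proof.
move=> Hj Hj' /eqP; rewrite /v nth_uniq ?Hsz ?ltn_mod // => /eqP E.
have M : forall a, a < k -> a.+1 %% k = if a.+1 == k then 0 else a.+1.
  move=> a Ha; case: (eqVneq a.+1 k) => [-> | Ne]; first by rewrite modnn.
  by rewrite modn_small //; lia.
move: E; rewrite !M //; case: (eqVneq j.+1 k); case: (eqVneq j'.+1 k); lia.
Qed.

Lemma vsum j r w : j < k -> r < 10 -> descV j r w ->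
  [\/ r < 5 /\ agree inP w (G j) /\ [\/ w yI = false, agree inQ w (H j) | exists2 x, x \in xs & agree inQ w x],
      r = 5 /\ agree inQ w (H j) /\ ~ agree inP w (G j),
      5 < r < 9 /\ agree inP w (G' j) /\ (w yI = false \/ exists2 x, x \in xs & agree inQ w x)
    | r = 9 /\ w = v j].
Proof.
move=> Hj; case: r => [|[|[|[|[|[|[|[|[|[|r]]]]]]]]]] //= _.
- case=> A B C; apply: Or41; do 2 split => //; apply: Or33; exists (u j) => //; exact: u_mem.
- case=> A B C; apply: Or41; do 2 split => //; apply: Or33; exists (u j) => //; exact: u_mem.
- case=> A B C D; apply: Or41; do 2 split => //; exact: Or31.
- case=> A B C; apply: Or41; do 2 split => //; exact: Or31.
- case=> A B; apply: Or41; do 2 split => //; exact: Or32.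
- by case=> A B; apply: Or42.
- case=> A B C; apply: Or43; do 2 split => //; by left.
- case=> A B C; apply: Or43; do 2 split => //; by left.
- case=> A B C; apply: Or43; do 2 split => //; right; exists (v j) => //; exact: v_mem.
- by move=> ->; apply: Or44.
Qed.

Lemma vpair_j j j' r r' w : j < k -> j' < k -> r < 10 -> r' < 10 ->
  descV j r w -> descV j' r' w -> j = j' /\ (r < 5 = (r' < 5)) /\ (r == 5) = (r' == 5) /\ (r == 9) = (r' == 9).
Proof.
move=> Hj Hj' Hr Hr' D D'.
case: (vsum Hj Hr D) => [[R1 [A1 B1]] | [R1 [A1 B1]] | [R1 [A1 B1]] | [R1 E1]];
case: (vsum Hj' Hr' D') => [[R2 [A2 B2]] | [R2 [A2 B2]] | [R2 [A2 B2]] | [R2 E2]].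
all: try (subst r || subst r'); try (subst r' || subst r).
all: try (have E := GG Hj Hj' A1 A2; subst j'; split => //; lia).
all: try (have E := HH Hj Hj' A1 A2; subst j'; split => //; lia).
all: try (have E := G'G' Hj Hj' A1 A2; subst j'; split => //; lia).
all: try (subst w; have E := v_inj Hj Hj' E2; subst j'; split => //; lia).
all: try (exfalso; exact: GG'F Hj Hj' A1 A2).
all: try (exfalso; exact: GG'F Hj' Hj A2 A1).
all: try (exfalso; subst w; apply: (GBF Hj (v_mem j') A1 (fun i _ => erefl))).
all: try (exfalso; subst w; apply: (GBF Hj' (v_mem j) A2 (fun i _ => erefl))).
all: try (exfalso; subst w; apply: (G'BF Hj (v_mem j') A1 (fun i _ => erefl))).
all: try (exfalso; subst w; apply: (G'BF Hj' (v_mem j) A2 (fun i _ => erefl))).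
all: try (exfalso; subst w; apply: (HBF Hj (v_mem j') A1 (fun i _ => erefl))).
all: try (exfalso; subst w; apply: (HBF Hj' (v_mem j) A2 (fun i _ => erefl))).
all: exfalso.
all: try (case: B1 => [Y | Q | [x Hx Q]]; [by move: (Hyt A2); rewrite Y
   | by have E := HH Hj Hj' Q A2; subst j'; exact: B2 A1 | exact: HBF Hj' Hx A2 Q]).
all: try (case: B2 => [Y | Q | [x Hx Q]]; [by move: (Hyt A1); rewrite Y
   | by have E := HH Hj' Hj Q A1; subst j'; exact: B1 A2 | exact: HBF Hj Hx A1 Q]).
all: try (case: B1 => [Y | [x Hx Q]]; [by move: (Hyt A2); rewrite Y | exact: HBF Hj' Hx A2 Q]).
all: try (case: B2 => [Y | [x Hx Q]]; [by move: (Hyt A1); rewrite Y | exact: HBF Hj Hx A1 Q]).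
Qed.




Lemma cy1 w a : agree inQ w a -> w yI = false -> a yI = true -> False.
Proof. by move=> H1 H2 H3; move: (Qy H1); rewrite H2 H3. Qed.
Lemma cy2 w j : agree inQ w (H j) -> w yI = false -> False.
Proof. by move=> H1 H2; move: (Hyt H1); rewrite H2. Qed.

Lemma vpair_r j r r' w : j < k -> r < 10 -> r' < 10 -> descV j r w -> descV j r' w ->
  (r < 5) = (r' < 5) -> (r == 5) = (r' == 5) -> (r == 9) = (r' == 9) -> r = r'.
Proof.
move=> Hj.
case: r => [|[|[|[|[|[|[|[|[|[|r]]]]]]]]]] //;
case: r' => [|[|[|[|[|[|[|[|[|[|r']]]]]]]]]] //= _ _.
all: move=> D1 D2 _ _ _; exfalso.
all: repeat match goal with
  | Hx : [/\ _, _, _ & _] |- _ => case: Hx => ? ? ? ?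
  | Hx : [/\ _, _ & _] |- _ => case: Hx => ? ? ?
  | Hx : _ /\ _ |- _ => case: Hx => ? ?
  end.
all: try match goal with
  | H1 : agree ?R ?w ?a, H2 : ~ agree ?R ?w ?a |- _ => exact: (H2 H1)
  | H1 : agree inQ ?w ?a, H2 : ~ agree inQ' ?w ?a |- _ => exact: (H2 (QQ' H1))
  end.
all: try match goal with
  | H1 : agree inQ ?w ?a |- _ => solve [apply: (cy1 H1); assumption]
  end.
all: try match goal with
  | H1 : agree inQ ?w (H _) |- _ => solve [apply: (cy2 H1); assumption]
  end.
all: try match goal with
  | H1 : agree inQ ?w (u ?j), H2 : agree inQ ?w (H ?j) |- _ =>
      exact: (HBF Hj (u_mem Hj) H2 H1)
  end.
Qed.



Definition cyc := flatten (map (pwalk (n:=n)) allp).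
Definition eds := flatten (map (ppedges (n:=n)) allp).

Lemma cyc_uniq : uniq cyc.
Proof.
rewrite /cyc /allp -map_comp.
apply: uniq_flatten_lab; first exact: labels_uniq.
  by move=> l _; exact: walk_uniq.
move=> [j r] [j' r'] w; rewrite !mem_labels /= => /andP [Hj Hr] /andP [Hj' Hr'] W1 W2.
have D1 := descV_ok Hr W1; have D2 := descV_ok Hr' W2.
have [E [E1 [E2 E3]]] := vpair_j Hj Hj' Hr Hr' D1 D2; subst j'.
by rewrite (vpair_r Hj Hr Hr' D1 D2 E1 E2 E3).
Qed.

Definition descE j r (e : V * 'I_n) : Prop :=
  match r with
  | 0 => e.2 = cu j /\ (forall i, i != cu j -> e.1 i = u j i)
  | 1 => [/\ inR e.2, agree inP e.1 (G j) & agree inQ e.1 (u j)]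
  | 2 => [/\ e.2 = yI, agree inP e.1 (G j), agree inQ' e.1 (u j) & u j yI = true]
  | 3 => [/\ inQ' e.2, agree inP e.1 (G j) & e.1 yI = false]
  | 4 => [/\ e.2 = yI, agree inP e.1 (G j) & agree inQ' e.1 (H j)]
  | 5 => inP e.2 /\ agree inQ e.1 (H j)
  | 6 => [/\ e.2 = yI, agree inP e.1 (G' j) & agree inQ' e.1 (H j)]
  | 7 => [/\ inQ' e.2, agree inP e.1 (G' j) & e.1 yI = false]
  | 8 => [/\ e.2 = yI, agree inP e.1 (G' j), agree inQ' e.1 (v j) & v j yI = true]
  | _ => e.2 = cv j /\ (forall i, i != cv j -> e.1 i = v j i)
  end.

Lemma descE_ok j r e : r < 10 -> e \in ppedges (pc j r) -> descE j r e.
Proof.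
rewrite /ppedges /pc /=.
case: r => [|[|[|[|[|[|[|[|[|[|r]]]]]]]]]] // _ He /=; have [Hd Hne] := pedges_dir He.
- have Hc : forall i, i != cu j -> u j i = st j 1 i.
    move=> i Hi /=; rewrite ffunE.
    case: ifP => _; [by rewrite /G flipE (negbTE Hi) | by case: (p <= i < p + q) => //; case: (_ == _)].
  split; first by apply/eqP; apply: contraNT Hne => /Hc ->.
  by move=> i Hi; rewrite (pedges_agree He (Hc _ Hi)).
- split => //.
  + by move=> i Hi; rewrite (pedges_agree He) /= !bP.
  + by move=> i /inQ_split [Hi | ->]; rewrite (pedges_agree He) /= ?bY // !bQ.
- have Ey := isY_eq Hd; move: Hne; rewrite Ey /= !bY ffunE => Hu.
  split => //; last by move: Hu; case: (u j yI).
  + by move=> i Hi; rewrite (pedges_agree He) /= !bP.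
  + by move=> i Hi; rewrite (pedges_agree He) /= !bQ.
- split => //.
  + by move=> i Hi; rewrite (pedges_agree He) /= !bP.
  + by rewrite (pedges_agree He) /= !bY ffunE.
- split; first exact: isY_eq.
  + by move=> i Hi; rewrite (pedges_agree He) /= !bP.
  + by move=> i Hi; rewrite (pedges_agree He) /= !bQ.
- split => //.
  by move=> i /inQ_split [Hi | ->]; rewrite (pedges_agree He) /= ?bY // !bQ.
- split; first exact: isY_eq.
  + by move=> i Hi; rewrite (pedges_agree He) /= !bP.
  + by move=> i Hi; rewrite (pedges_agree He) /= !bQ.
- split => //.
  + by move=> i Hi; rewrite (pedges_agree He) /= !bP.
  + by rewrite (pedges_agree He) /= !bY ffunE.
- have Ey := isY_eq Hd; move: Hne; rewrite Ey /= !bY ffunE => Hv.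
  split => //; last by move: Hv; case: (v j yI).
  + by move=> i Hi; rewrite (pedges_agree He) /= !bP.
  + by move=> i Hi; rewrite (pedges_agree He) /= !bQ.
- have Hc : forall i, i != cv j -> st j 9 i = v j i.
    move=> i Hi /=; rewrite ffunE.
    case: ifP => _; [by rewrite /G' flipE (negbTE Hi) | by case: (p <= i < p + q) => //; case: (_ == _)].
  split; first by apply/eqP; apply: contraNT Hne => /Hc ->.
  by move=> i Hi; rewrite (pedges_agree He) ?Hc // Hc.
Qed.


Definition Kequiv (e e' : V * 'I_n) :=
  e.2 = e'.2 /\ forall i : 'I_n, i < ttk -> i != e.2 -> e.1 i = e'.1 i.

Lemma kP e e' : Kequiv e e' -> ~~ inP e.2 -> agree inP e.1 e'.1.
Proof.
move=> [_ K] H1 i Hi; apply: K; first by move: Hi; rewrite /inP /ttk; lia.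
by apply: contraNneq H1 => <-.
Qed.
Lemma kQ e e' : Kequiv e e' -> ~~ inQ e.2 -> agree inQ e.1 e'.1.
Proof.
move=> [_ K] H1 i Hi; apply: K; first by move: Hi; rewrite /inQ /ttk; lia.
by apply: contraNneq H1 => <-.
Qed.
Lemma kQ' e e' : Kequiv e e' -> ~~ inQ' e.2 -> agree inQ' e.1 e'.1.
Proof.
move=> [_ K] H1 i Hi; apply: K; first by move: Hi; rewrite /inQ' /ttk; lia.
by apply: contraNneq H1 => <-.
Qed.
Lemma Ksym e e' : Kequiv e e' -> Kequiv e' e.
Proof. by case=> E K; split => // i Hi; rewrite -E => Hne; rewrite K. Qed.

Definition kindE r := if r == 0 then 0 else if r < 5 then 1 else if r == 5 then 2 else if r < 9 then 3 else 4.

Lemma esum j r e : r < 10 -> descE j r e ->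
  [\/ [/\ kindE r = 1, ~~ inP e.2 & agree inP e.1 (G j)],
      [/\ kindE r = 3, ~~ inP e.2 & agree inP e.1 (G' j)],
      [/\ kindE r = 2, inP e.2 & agree inQ e.1 (H j)]
    | [/\ kindE r = 0, e.2 = cu j & forall i, i != cu j -> e.1 i = u j i] \/
      [/\ kindE r = 4, e.2 = cv j & forall i, i != cv j -> e.1 i = v j i]].
Proof.
have nPy : ~~ inP yI by rewrite /inP /=; lia.
case: r => [|[|[|[|[|[|[|[|[|[|r]]]]]]]]]] //= _.
- by case=> A B; apply: Or44; left.
- case=> A B C; apply: Or41; split => //; move: A; rewrite /inR /inP; lia.
- by case=> A B C D; apply: Or41; split => //; rewrite A.
- case=> A B C; apply: Or41; split => //; move: A; rewrite /inQ' /inP; lia.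
- by case=> A B C; apply: Or41; split => //; rewrite A.
- by case=> A B; apply: Or43.
- by case=> A B C; apply: Or42; split => //; rewrite A.
- case=> A B C; apply: Or42; split => //; move: A; rewrite /inQ' /inP; lia.
- by case=> A B C D; apply: Or42; split => //; rewrite A.
- by case=> A B; apply: Or44; right.
Qed.

Lemma tagpair (a b : V) (c : 'I_n) : (forall i : 'I_n, i < p -> i != c -> a i = b i) ->
  agree inP (flip a c) (flip b c) \/ agree inP (flip a c) b.
Proof.
move=> Hab; case: (eqVneq (a c) (b c)) => Hc.
- left => i Hi; rewrite !flipE; case: (eqVneq i c) => [-> | Hic]; first by rewrite Hc.
  by rewrite Hab.
- right => i Hi; rewrite !flipE; case: (eqVneq i c) => [-> | Hic]; last by rewrite Hab.
  by move: Hc; case: (a c) (b c) => [] [].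
Qed.

Lemma tagedge (a b : V) (c1 c2 : 'I_n) (e e' : V * 'I_n) : Kequiv e e' -> e.2 = c1 -> e'.2 = c2 ->
  (forall i, i != c1 -> e.1 i = a i) -> (forall i, i != c2 -> e'.1 i = b i) -> c1 < p ->
  agree inP (flip a c1) (flip b c2) \/ agree inP (flip a c1) b.
Proof.
move=> [E K] N1 N2 A1 A2 Hc1.
have Hc : c2 = c1 by rewrite -N2 -E N1.
rewrite Hc; apply: tagpair => i Hi Hic.
have Hi' : i < ttk by rewrite /ttk; lia.
by rewrite -A1 // (K i Hi') ?N1 // A2 // Hc.
Qed.

Lemma Gself j : agree inP (G j) (G j). Proof. by []. Qed.
Lemma G'self j : agree inP (G' j) (G' j). Proof. by []. Qed.

Lemma epair_j j j' r r' e e' : j < k -> j' < k -> r < 10 -> r' < 10 ->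
  descE j r e -> descE j' r' e' -> Kequiv e e' -> j = j' /\ kindE r = kindE r'.
Proof.
move=> Hj Hj' Hr Hr' D D' K; have K' := Ksym K; have [E2 _] := K.
have nPQ : forall i, inP i -> ~~ inQ i by move=> i; rewrite /inP /inQ; lia.
case: (esum Hr D) => [[R1 N1 A1] | [R1 N1 A1] | [R1 N1 A1] | [[R1 N1 A1] | [R1 N1 A1]]];
case: (esum Hr' D') => [[R2 N2 A2] | [R2 N2 A2] | [R2 N2 A2] | [[R2 N2 A2] | [R2 N2 A2]]];
rewrite ?R1 ?R2.
all: try (by exfalso; move: N1; rewrite E2 N2).
all: try (by exfalso; move: N2; rewrite -E2 N1).
all: try (by exfalso; move: N1; rewrite E2 N2 /inP Hsel).
all: try (by exfalso; move: N2; rewrite -E2 N1 /inP Hsel).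
all: try (have A := agree_tr (kP K N1) A1).
all: try (by split => //; exact: GG Hj Hj' A A2).
all: try (by exfalso; exact: GG'F Hj Hj' A A2).
all: try (by exfalso; exact: GG'F Hj' Hj A2 A).
all: try (by split => //; exact: G'G' Hj Hj' A A2).
all: try (have nQ : ~~ inQ e.2 by apply: nPQ).
all: try (have B := agree_tr (kQ K nQ) A1).
all: try (by split => //; exact: HH Hj Hj' B A2).
all: try (by exfalso; apply: (HBF Hj (u_mem Hj') (agree_tr (kQ K nQ) A1));
    move=> i Hi; apply: A2; apply: contraTneq Hi => ->; rewrite -N2 -E2; exact: nPQ).
all: try (by exfalso; apply: (HBF Hj (v_mem j') (agree_tr (kQ K nQ) A1));
    move=> i Hi; apply: A2; apply: contraTneq Hi => ->; rewrite -N2 -E2; exact: nPQ).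
all: try (have nQ' : ~~ inQ e'.2 by apply: nPQ).
all: try (by exfalso; apply: (HBF Hj' (u_mem Hj) (agree_tr (kQ K' nQ') A2));
    move=> i Hi; apply: A1; apply: contraTneq Hi => ->; rewrite -N1 E2; exact: nPQ).
all: try (by exfalso; apply: (HBF Hj' (v_mem j) (agree_tr (kQ K' nQ') A2));
    move=> i Hi; apply: A1; apply: contraTneq Hi => ->; rewrite -N1 E2; exact: nPQ).
all: try (split; last done).
all: have T := tagedge K N1 N2 A1 A2 (Hsel _).
all: rewrite -/(G j) -/(G' j) -/(G j') -/(G' j') in T.
all: try (case: T => T; [exact: GG Hj Hj' (Gself j) T | exfalso; exact: GBF Hj (u_mem Hj') (Gself j) T]).
all: try (case: T => T; [exact: G'G' Hj Hj' (G'self j) T | exfalso; exact: G'BF Hj (v_mem j') (G'self j) T]).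
all: try (exfalso; case: T => T; [exact: GG'F Hj Hj' (Gself j) T | exact: GBF Hj (v_mem j') (Gself j) T]).
all: try (exfalso; case: T => T; [exact: GG'F Hj' Hj T (G'self j) | exact: G'BF Hj (u_mem Hj') (G'self j) T]).
Qed.


Lemma mkQ a b : agree inQ' a b -> a yI = b yI -> agree inQ a b.
Proof. by move=> H1 H2 i /inQ_split [Hi | ->]; [apply: H1|]. Qed.
Lemma nQ'y : ~~ inQ' yI. Proof. rewrite /inQ' /=; lia. Qed.
Lemma nRy : ~~ inR yI. Proof. rewrite /inR /=; lia. Qed.
Lemma nRQ' i : inR i -> inQ' i -> False. Proof. rewrite /inR /inQ'; lia. Qed.

Lemma L1 (x y : 'I_n) : x = y -> inR x -> inQ' y -> False.
Proof. by move=> E H1 H2; subst x; apply: (nRQ' H1 H2). Qed.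
Lemma L2 (x y : 'I_n) : x = y -> inR x -> y = yI -> False.
Proof. by move=> E H1 E2; subst x y; move: H1; rewrite (negbTE nRy). Qed.
Lemma L3 (x y : 'I_n) : x = y -> inQ' x -> y = yI -> False.
Proof. by move=> E H1 E2; subst x y; move: H1; rewrite (negbTE nQ'y). Qed.

Lemma yyF (a : V) j e e' : j < k -> a \in xs -> Kequiv e e' -> e.2 = yI ->
  agree inQ' e.1 a -> agree inQ' e'.1 (H j) -> a yI = true -> False.
Proof.
move=> Hj Ha K Ey A1 A2 Hay.
have nQ : ~~ inQ' e.2 by rewrite Ey nQ'y.
have A := agree_tr (agree_tr (kQ' K nQ) A1) A2.
have Hy : a yI = H j yI by rewrite Hay /H Hh_y.
exact: (HBF Hj Ha (mkQ A Hy) (fun i _ => erefl)).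
Qed.

Lemma epair_r j r r' e e' : j < k -> r < 10 -> r' < 10 ->
  descE j r e -> descE j r' e' -> Kequiv e e' -> kindE r = kindE r' -> r = r'.
Proof.
move=> Hj; case: r => [|[|[|[|[|[|[|[|[|[|r]]]]]]]]]] //;
case: r' => [|[|[|[|[|[|[|[|[|[|r']]]]]]]]]] //= _ _.
all: move=> D1 D2 K _; have [E2 _] := K; exfalso.
all: repeat match goal with
  | Hx : [/\ _, _, _ & _] |- _ => case: Hx => ? ? ? ?
  | Hx : [/\ _, _ & _] |- _ => case: Hx => ? ? ?
  | Hx : _ /\ _ |- _ => case: Hx => ? ? 
  end.
all: have E2' := esym E2.
all: try solve [ apply: (L1 E2); assumption | apply: (L1 E2'); assumption
  | apply: (L2 E2); assumption | apply: (L2 E2'); assumption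
  | apply: (L3 E2); assumption | apply: (L3 E2'); assumption ].
all: have K' := Ksym K.
all: try solve [ apply: (yyF Hj (u_mem Hj) K); assumption | apply: (yyF Hj (u_mem Hj) K'); assumption
  | apply: (yyF Hj (v_mem j) K); assumption | apply: (yyF Hj (v_mem j) K'); assumption ].
Qed.


Lemma eds_keys_uniq : uniq (map (keyE Htn) eds).
Proof.
rewrite /eds /allp map_flatten -!map_comp.
apply: uniq_flatten_lab; first exact: labels_uniq.
  move=> l _; rewrite /= /ppedges /pedges.
  apply: (@map_uniq _ _ fst); rewrite -map_comp.
  rewrite (eq_map (_ : fst \o keyE Htn =1 snd)) // fedges_snd; exact: diffs_uniq.
move=> [j r] [j' r'] x; rewrite !mem_labels /= => /andP [Hj Hr] /andP [Hj' Hr'].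
move=> /mapP [e He ->] /mapP [e' He' /keyE_eq [K1 K2]].
have K : Kequiv e e' by split.
have D1 := descE_ok Hr He; have D2 := descE_ok Hr' He'.
have [E Ek] := epair_j Hj Hj' Hr Hr' D1 D2 K; subst j'.
by rewrite (epair_r Hj Hr Hr' D1 D2 K Ek).
Qed.

Hypothesis Hk3 : 2 < k.

Lemma v_in_cyc j : j < k -> v j \in cyc.
Proof.
move=> Hj; rewrite /cyc /allp -map_comp; apply/flattenP.
exists (pwalk (pc j 9)); first by apply/mapP; exists (j, 9) => //; rewrite mem_labels /= Hj.
rewrite /pwalk /pc /=; apply: walk_mem_last.
  move=> i /= Hi; rewrite ffunE; have := Hi; rewrite /inP => /negbTE ->.
  by case: (_ && _) => //; case: (_ == _).
apply/eqP => /ffunP /(_ (cv j)); rewrite bP ?Hsel // /G' flipE eqxx.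
by case: (v j (cv j)).
Qed.

Lemma xs_in_cyc : {subset xs <= cyc}.
Proof.
move=> x /(nthP x0) [l Hl <-]; rewrite Hsz in Hl.
case: l Hl => [|l] Hl.
  have := v_in_cyc (_ : k.-1 < k); rewrite /v prednK // modnn; apply; lia.
have := v_in_cyc (_ : l < k); rewrite /v modn_small //; apply; lia.
Qed.

Lemma cyc_rainbow : rainbow_cycle (colr Htn yI) cyc /\ {subset xs <= cyc}.
Proof.
have [Hc Hend] := allp_chain.
have [Hpath Hlast] := chain_path Hc; rewrite Hend in Hlast.
have Hz := chain_zip Hc.
have Hu := cyc_uniq.
split; last exact: xs_in_cyc.
split.
  rewrite /is_cube_cycle Hu /=; apply/andP; split.
    have := uniq_leq_size Huniq xs_in_cyc; rewrite Hsz; exact: leq_trans Hk3.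
  by rewrite (cycle_path (u 0)) /cyc Hlast.
rewrite /cycle_colours.
have H0 : 0 < size xs by rewrite Hsz; exact: Hk.
have Hne : cyc != [::] by apply/eqP => E; have := xs_in_cyc (mem_nth x0 H0); rewrite E.
have Hlast' : last (u 0) cyc = u 0 := Hlast.
have Hz' : zip (u 0 :: cyc) cyc = [seq (e.1, flip e.1 e.2) | e <- eds] := Hz.
case E: cyc Hne Hlast' Hz' => [|a s] // _ Hl Hzz.
rewrite rot1_cons zip_rot1 /=; rewrite /= in Hl.
have -> : rcons (zip (a :: s) s) (last a s, a) = rot 1 (zip (u 0 :: a :: s) (a :: s)).
  by rewrite /= rot1_cons Hl.
rewrite map_rot rot_uniq Hzz -map_comp.
rewrite (eq_map (_ : _ =1 (fun e => enum_rank (keyE Htn e)))); last first.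
  by move=> [w i] /=; rewrite colr_flip.
by rewrite (map_comp enum_rank) map_inj_uniq ?eds_keys_uniq //; exact: enum_rank_inj.
Qed.

End Construction.


Lemma pigeon (T : eqType) m (f : 'I_m -> T) (s : seq T) :
  injective f -> size s < m -> exists c, f c \notin s.
Proof.
move=> Hf Hs; case: (boolP [exists c, f c \notin s]) => [/existsP [c Hc] | /existsPn H]; first by exists c.
have : size (map f (enum 'I_m)) <= size s.
  apply: uniq_leq_size; first by rewrite map_inj_uniq ?enum_uniq.
  by move=> x /mapP [c _ ->]; move: (H c); rewrite negbK.
by rewrite size_map size_enum_ord; lia.
Qed.

Lemma greedy (T : eqType) m (fam : nat -> 'I_m -> T) (forb : seq T) K (c0 : 'I_m) :
  (forall j, injective (fam j)) -> size forb + K <= m ->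
  exists sel : nat -> 'I_m,
    (forall j1 j2, j1 < K -> j2 < K -> fam j1 (sel j1) = fam j2 (sel j2) -> j1 = j2) /\
    (forall j, j < K -> fam j (sel j) \notin forb).
Proof.
move=> Hinj; elim: K => [|K IH] HK.
  by exists (fun _ => c0); split => // j; rewrite ltn0.
have [sel [S1 S2]] := IH (ltac:(lia)).
set forb' := forb ++ [seq fam j (sel j) | j <- iota 0 K].
have [c Hc] := @pigeon _ _ (fam K) forb' (Hinj K) ltac:(rewrite size_cat size_map size_iota; lia).
exists (fun j => if j == K then c else sel j); split.
  move=> j1 j2 H1 H2.
  case: (eqVneq j1 K) => [-> | N1]; case: (eqVneq j2 K) => [-> | N2] // E.
  - exfalso; move: Hc; rewrite mem_cat negb_or => /andP [_ /negP]; apply.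
    by rewrite E; apply/mapP; exists j2 => //; rewrite mem_iota; lia.
  - exfalso; move: Hc; rewrite mem_cat negb_or => /andP [_ /negP]; apply.
    by rewrite -E; apply/mapP; exists j1 => //; rewrite mem_iota; lia.
  - apply: S1 => //; lia.
move=> j Hj; case: (eqVneq j K) => [-> | N].
  by move: Hc; rewrite mem_cat negb_or => /andP [].
apply: S2; lia.
Qed.

Section Parts.
Variable n : nat.
Local Notation V := (cube_vertex n).
Definition part (R : pred 'I_n) (v : V) := [seq v i | i <- enum 'I_n & R i].
Lemma part_agree R (a b : V) : part R a = part R b -> agree R a b.
Proof.
move/eq_in_map => H i Hi; apply: H; by rewrite mem_filter Hi mem_enum.
Qed.
Lemma agree_part R (a b : V) : agree R a b -> part R a = part R b.
Proof.
move=> H; apply/eq_in_map => i; rewrite mem_filter => /andP [Hi _]; exact: H.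
Qed.
End Parts.

Section Upper.
Variables (k n : nat).
Hypothesis Hk3 : 2 < k.
Hypothesis Htn : ttk k <= n.
Local Notation V := (cube_vertex n).

Lemma Hpn : p k <= n. Proof. move: Htn; rewrite /ttk /p /q; lia. Qed.
Lemma Hpq (s : 'I_(q k)) : p k + s < n. Proof. move: Htn (ltn_ord s); rewrite /ttk /p /q; lia. Qed.

Definition htag (s : 'I_(q k)) : V :=
  [ffun i : 'I_n => (nat_of_ord i == p k + q k) || (nat_of_ord i == p k + s)].

Lemma htag_inj : injective (fun s => part (@inQ k n) (htag s)).
Proof.
move=> s1 s2 /part_agree /(_ (Ordinal (Hpq s1))).
rewrite !ffunE /= eqxx orbT.
have -> : (p k + s1 == p k + q k) = false by have := ltn_ord s1; lia.
rewrite /= => H; apply: val_inj => /=; apply/eqP; rewrite -(eqn_add2l (p k)) -H //.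
rewrite /inQ /=; have := ltn_ord s1; lia.
Qed.

Lemma pfam_inj (b : V) : injective (fun c : 'I_(p k) => part (@inP k n) (flip b (widen_ord Hpn c))).
Proof.
move=> c1 c2 /part_agree /(_ (widen_ord Hpn c1)).
rewrite !flipE eqxx; case: (eqVneq (widen_ord Hpn c1) (widen_ord Hpn c2)) => [E | N].
  by move=> _; apply: val_inj; move: E => /(congr1 val).
by case: (b _) => /(_ (ltn_ord c1)).
Qed.

Lemma crx_upper : crx_colourable k n #|{: KT n (ttk k)}|.
Proof.
exists (colr Htn (yI Htn)); split; first by move=> x y; exact: colr_sym.
move=> S HS.
set xs := enum S.
have Hsz : size xs = k by rewrite -HS cardE.
have Huniq : uniq xs := enum_uniq _.
set x0 : V := [ffun => false].
set base := fun idx => if idx < k then u x0 xs idx else v k x0 xs (idx - k).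
have Hk0 : 0 < k by lia.
have Hp0 : 0 < p k by rewrite /p; lia.
have [selP [SP1 SP2]] := @greedy _ _ (fun j c => part (@inP k n) (flip (base j) (widen_ord Hpn c)))
  [seq part (@inP k n) x | x <- xs] (2 * k) (Ordinal Hp0) (fun j => @pfam_inj (base j))
  ltac:(rewrite size_map Hsz /p; lia).
have Hq0 : 0 < q k by rewrite /q; lia.
have [selQ [SQ1 SQ2]] := @greedy _ _ (fun j s => part (@inQ k n) (htag s))
  [seq part (@inQ k n) x | x <- xs] k (Ordinal Hq0) (fun j => htag_inj)
  ltac:(rewrite size_map Hsz /q; lia).
set sel := fun j => widen_ord Hpn (selP j).
set hsel := fun j => htag (selQ j).
have Hptag : forall idx, ptag k x0 xs sel idx = flip (base idx) (sel idx).
  move=> idx; rewrite /ptag /base /G /G' /cu /cv; case: ifP => // H.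
  by rewrite subnKC //; lia.
have Hhy : forall j, hsel j (yI Htn) = true by move=> j; rewrite /hsel /htag ffunE /= eqxx.
have [[Hcyc Hrb] Hsub] := @cyc_rainbow k n Htn x0 xs sel hsel Hk0 Hsz Huniq
  (fun j => ltn_ord (selP j))
  (fun j1 j2 H1 H2 A => SP1 j1 j2 H1 H2 ltac:(rewrite -!Hptag; exact: agree_part A))
  (fun j x H1 Hx A => (negP (SP2 j H1)) ltac:(rewrite -Hptag (agree_part A); exact: map_f))
  Hhy (fun j1 j2 H1 H2 A => SQ1 j1 j2 H1 H2 (agree_part A))
  (fun j x H1 Hx A => (negP (SQ2 j H1)) ltac:(rewrite (agree_part A); exact: map_f)) Hk3.
exists (cyc k x0 xs sel hsel); split; first by split.
by move=> x Hx; apply: Hsub; rewrite mem_enum.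
Qed.

End Upper.


Lemma ivt (f : nat -> bool) a b : a <= b -> f a != f b -> exists2 t, a <= t < b & f t != f t.+1.
Proof.
elim: b => [|b IH] Hab Hf.
  by move: Hab Hf; rewrite leqn0 => /eqP ->; rewrite eqxx.
case: (eqVneq a b.+1) => [E | Ne]; first by move: Hf; rewrite E eqxx.
case: (eqVneq (f a) (f b)) => [E | Ne2].
  by exists b; [lia | rewrite -E].
have [t Ht Hft] := IH (ltac:(lia)) Ne2; exists t => //; lia.
Qed.

Lemma cycle_nth (T : Type) (e : rel T) (x0 : T) (c : seq T) t :
  cycle e c -> t.+1 < size c -> e (nth x0 c t) (nth x0 c t.+1).
Proof.
case: c => [|x s] //= /(pathP x0) H Ht.
have := H t; rewrite size_rcons => /(_ (ltac:(lia))).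
rewrite -rcons_cons !nth_rcons /=.
have -> : t < (size s).+1 by lia.
by have -> : t < size s by lia.
Qed.

Lemma adj_unique n (x y : cube_vertex n) i1 i2 :
  cube_adj x y -> x i1 != y i1 -> x i2 != y i2 -> i1 = i2.
Proof.
rewrite /cube_adj => /cards1P [i0 E] H1 H2.
have : i1 \in [set i | x i != y i] by rewrite inE.
have : i2 \in [set i | x i != y i] by rewrite inE.
by rewrite E !inE => /eqP -> /eqP ->.
Qed.

Lemma cycle_geo n (c : seq (cube_vertex n)) a b :
  cycle (@cube_adj n) c -> a <= b -> b < size c ->
  (forall i, nth [ffun => false] c a i != nth [ffun => false] c b i) -> n <= b - a.
Proof.
move=> Hc Hab Hb Hd.
set z : cube_vertex n := [ffun => false].
have Hex : forall i : 'I_n, exists2 t, a <= t < b & nth z c t i != nth z c t.+1 i.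
  by move=> i; apply: (ivt (f := fun t => nth z c t i)) => //; exact: Hd.
pose P (i : 'I_n) : pred nat := fun t => (a <= t < b) && (nth z c t i != nth z c t.+1 i).
have Hex' : forall i, exists t, P i t by move=> i; have [t Ht H] := Hex i; exists t; rewrite /P Ht H.
pose f (i : 'I_n) := ex_minn (Hex' i).
have Hf : forall i, a <= f i < b /\ nth z c (f i) i != nth z c (f i).+1 i.
  move=> i; rewrite /f; case: ex_minnP => t /andP [H1 H2] _; by split.
have Hinj : injective f.
  move=> i1 i2 E; have [A1 B1] := Hf i1; have [A2 B2] := Hf i2.
  have Ht : (f i1).+1 < size c by lia.
  have Hadj := cycle_nth z Hc Ht.
  apply: (adj_unique Hadj B1); by rewrite E.
have := uniq_leq_size (s1 := map f (enum 'I_n)) (s2 := iota a (b - a)).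
rewrite map_inj_uniq ?enum_uniq // size_map size_enum_ord size_iota; apply => //.
move=> t /mapP [i _ ->]; have [A1 _] := Hf i; rewrite mem_iota; lia.
Qed.

Lemma exS (T : finType) (x y : T) k : x != y -> 2 <= k -> k <= #|T| ->
  exists S : {set T}, [/\ #|S| = k, x \in S & y \in S].
Proof.
move=> Hxy Hk2 HkT.
set L := x :: y :: enum (~: [set x; y]).
have HU : uniq L.
  rewrite /L /= enum_uniq !mem_enum !inE !negbK eqxx orbT /= andbT.
  by rewrite (negbTE Hxy) mem_enum !inE eqxx.
have HL : size L = #|T|.
  rewrite /L /= -cardE; have := cardsCs [set x; y]; rewrite cards2 Hxy /=.
  have : #|~: [set x; y]| <= #|T| by apply: max_card.
  have : 2 <= #|T| by lia.
  lia.
exists [set z in take k L]; split.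
- by rewrite cardsE; move/card_uniqP: (take_uniq k HU) => ->; rewrite size_takel // HL.
- rewrite inE; case: k Hk2 HkT => [|[|k]] //= _ _; by rewrite inE eqxx.
- rewrite inE; case: k Hk2 HkT => [|[|k]] //= _ _; by rewrite !inE eqxx orbT.
Qed.

Lemma crx_lower k n m : 2 <= k -> k <= 2 ^ n -> 0 < n -> crx_colourable k n m -> n <= m.
Proof.
move=> Hk2 Hkn Hn [col [_ Hcol]].
set Z : cube_vertex n := [ffun => false].
set O : cube_vertex n := [ffun => true].
have ZO : Z != O by apply/eqP => /ffunP /(_ (Ordinal Hn)); rewrite !ffunE.
have HT : #|{: cube_vertex n}| = 2 ^ n by rewrite card_ffun card_bool card_ord.
have [S [HS HZ HO]] := exS ZO Hk2 (ltac:(by rewrite HT)).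
have [c [[Hcc Hu] Hsub]] := Hcol S HS.
move: Hcc; rewrite /is_cube_cycle => /and3P [H3 Hcu Hcy].
have Zc := Hsub _ HZ; have Oc := Hsub _ HO.
have Hsc : size c <= m.
  have := uniq_leq_size (s1 := cycle_colours col c) (s2 := enum 'I_m) Hu.
  rewrite size_enum_ord /cycle_colours size_map size_zip size_rot minnn; apply.
  by move=> i _; rewrite mem_enum.
set a := index Z c; set b := index O c.
have Ha : a < size c by rewrite index_mem.
have Hb : b < size c by rewrite index_mem.
have Na : nth Z c a = Z := nth_index Z Zc.
have Nb : nth Z c b = O := nth_index Z Oc.
case: (leqP a b) => Hab.
  have := @cycle_geo n c a b Hcy Hab Hb; rewrite Na Nb => /(_ (fun i => ltac:(by rewrite !ffunE))).
  lia.
have := @cycle_geo n c b a Hcy (ltnW Hab) Ha; rewrite Na Nb => /(_ (fun i => ltac:(by rewrite !ffunE))).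
lia.
Qed.

Lemma ex_min (P : nat -> Prop) m0 : P m0 -> exists m, P m /\ forall m', P m' -> m <= m'.
Proof.
elim/ltn_ind: m0 => m IH Pm.
case: (classic (exists m', P m' /\ m' < m)) => [[m' [Pm' Hlt]] | Hno]; first exact: IH m' Hlt Pm'.
exists m; split => // m' Pm'; rewrite leqNgt; apply/negP => Hlt; apply: Hno; by exists m'.
Qed.


Lemma card_KT n t : #|{: KT n t}| = n * 2 ^ t.
Proof. by rewrite /KT card_prod card_ord card_ffun card_bool card_ord. Qed.

Unset Implicit Arguments.
Import Order.TTheory GRing.Theory Num.Theory.

Theorem theorem3p7 (k : nat) (hk : (4 <= k)%N) :
  exists c_k C_k : rat, (0 < c_k)%R /\ (0 < C_k)%R /\
    forall n : nat, (4 * k ^ 2 <= n)%N ->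
      exists m : nat, is_crx k n m /\
        (c_k * n%:R <= m%:R)%R /\ (m%:R <= C_k * n%:R)%R.
Proof.
exists 1%R, ((2 ^ ttk k)%N%:R)%R; split; first exact: ltr01.
split; first by rewrite ltr0n expn_gt0.
move=> n Hn.
have Hk3 : (2 < k)%N by lia.
have Hkk : (5 * k + 1 <= 4 * k ^ 2)%N by rewrite expnS expn1; nia.
have Htn : (ttk k <= n)%N by rewrite /ttk /p /q; lia.
have [m [Hm Hmin]] := ex_min (crx_upper Hk3 Htn).
have Hn0 : (0 < n)%N by lia.
have Hk2n : (k <= 2 ^ n)%N.
  have := ltn_expl n (isT : (1 < 2)%N); lia.
have Hk2 : (2 <= k)%N by lia.
have Hlow := crx_lower Hk2 Hk2n Hn0 Hm.
have Hup := Hmin _ (crx_upper Hk3 Htn); rewrite card_KT in Hup.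
exists m; split; first by split.
split; first by rewrite mul1r ler_nat.
by rewrite -natrM ler_nat mulnC.
Qed.
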